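(* Consider the 1D radiative transfer setting with $x\in(0,1)$, $v\in[-1,1]$, $\langle f\rangle=\frac12\int_{-1}^1f(x,v)\,\mathrm{d}v$, $\mathcal{L}f=\langle f\rangle-f$, Knudsen number $\mathsf{Kn}>0$, a background scattering coefficient $\sigma_{s0}(x)>0$ and absorption coefficient $\sigma_a\equiv0$. Given arbitrary inflow data $\phi_d$ and a boundary point $y\in\{0,1\}$, let $f_0$ solve $$v\,\partial_xf_0=\tfrac1{\mathsf{Kn}}\sigma_{s0}\mathcal{L}f_0-\mathsf{Kn}\,\sigma_af_0,\qquad f_0|_{\Gamma_-}=\phi_d,$$ and let $g$ solve $$-v\,\partial_xg=\tfrac1{\mathsf{Kn}}\sigma_{s0}\mathcal{L}g-\mathsf{Kn}\,\sigma_ag,\qquad g|_{\Gamma_+}=\delta_y(x),$$ and define $\gamma_{\mathsf{Kn}}(x;\delta_y,\phi_d)=\frac1{\mathsf{Kn}}\int g(x,v;\delta_y)\,\mathcal{L}f_0(x,v;\phi_d)\,\mathrm{d}v$. Then $\gamma_{\mathsf{Kn}}$ is a constant independent of $x$.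
   Context: $\Gamma_-=\{(0,v):v>0\}\cup\{(1,v):v<0\}$ and $\Gamma_+=\{(0,v):v<0\}\cup\{(1,v):v>0\}$ are the incoming and outgoing boundary sets. *)

(* Defs.v *)
From Stdlib Require Import Reals.
From Coquelicot Require Import Coquelicot.
Open Scope R_scope.

Definition Dom (x v : R) : Prop := 0 < x < 1 /\ -1 <= v <= 1.

Definition jcont (F : R -> R -> R) : Prop :=
  forall x v, Dom x v -> forall eps : R, 0 < eps ->
    exists delta : R, 0 < delta /\
      forall x' v', Dom x' v' -> Rabs (x' - x) < delta -> Rabs (v' - v) < delta ->
        Rabs (F x' v' - F x v) < eps.

Definition avg (F : R -> R -> R) (x : R) : R := / 2 * RInt (fun v => F x v) (-1) 1.

Definition Lop (F : R -> R -> R) (x v : R) : R := avg F x - F x v.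

Definition dx (F : R -> R -> R) (x v : R) : R := Derive (fun y => F y v) x.

(* Classical (strong) solution on (0,1) x [-1,1] of
     s * v * d_x F = (1/Kn) sigma_s L F - Kn sigma_a F,
   with s = 1 (forward equation) or s = -1 (adjoint equation),
   F continuous in x up to the boundary x = 0, 1 for every v. *)
Definition is_RTE_sol (s Kn : R) (sigma_s sigma_a : R -> R) (F : R -> R -> R) : Prop :=
  (forall x v, Dom x v -> ex_derive (fun y => F y v) x) /\
  jcont F /\ jcont (dx F) /\
  (forall x v, 0 <= x <= 1 -> -1 <= v <= 1 ->
     filterlim (fun y => F y v) (within (fun y => 0 <= y <= 1) (locally x))
               (locally (F x v))) /\
  (forall x v, Dom x v ->
     s * v * dx F x v = / Kn * sigma_s x * Lop F x v - Kn * sigma_a x * F x v).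

(* boundary condition on Gamma_- = {(0,v): v>0} U {(1,v): v<0} *)
Definition inflow_bc (F phi : R -> R -> R) : Prop :=
  (forall v, 0 < v <= 1 -> F 0 v = phi 0 v) /\
  (forall v, -1 <= v < 0 -> F 1 v = phi 1 v).

(* boundary condition on Gamma_+ = {(0,v): v<0} U {(1,v): v>0} *)
Definition outflow_bc (F phi : R -> R -> R) : Prop :=
  (forall v, -1 <= v < 0 -> F 0 v = phi 0 v) /\
  (forall v, 0 < v <= 1 -> F 1 v = phi 1 v).

Definition delta_bd (y : R) (x v : R) : R := if Req_EM_T x y then 1 else 0.

Definition gammaKn (Kn : R) (g f0 : R -> R -> R) (x : R) : R :=
  / Kn * RInt (fun v => g x v * Lop f0 x v) (-1) 1.

(* Main.v *)
Require Import Defs.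
From Stdlib Require Import Reals Lra.
From Coquelicot Require Import Coquelicot.
Open Scope R_scope.

Definition clamp (v : R) : R := Rmax (-1) (Rmin 1 v).

Lemma clamp_in v : -1 <= clamp v <= 1.
Proof. unfold clamp, Rmax, Rmin; repeat destruct Rle_dec; lra. Qed.

Lemma clamp_id v : -1 <= v <= 1 -> clamp v = v.
Proof. intros; unfold clamp, Rmax, Rmin; repeat destruct Rle_dec; lra. Qed.

Lemma clamp_lip a b : Rabs (clamp a - clamp b) <= Rabs (a - b).
Proof.
  unfold clamp, Rmax, Rmin; repeat destruct Rle_dec;
  unfold Rabs; repeat destruct Rcase_abs; lra.
Qed.

Definition ext (F : R -> R -> R) := fun a b => F a (clamp b).

Lemma cont2d F x v : jcont F -> 0 < x < 1 -> continuity_2d_pt (ext F) x v.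
Proof.
  intros HF Hx eps.
  destruct (HF x (clamp v) (conj Hx (clamp_in v)) eps (cond_pos eps)) as [d [Hd H]].
  assert (Hm : 0 < Rmin d (Rmin x (1 - x))).
  { unfold Rmin; repeat destruct Rle_dec; lra. }
  exists (mkposreal _ Hm); simpl; intros u w Hu Hw.
  unfold ext.
  assert (Hu1 : Rabs (u - x) < d /\ Rabs (u - x) < x /\ Rabs (u - x) < 1 - x).
  { revert Hu; unfold Rmin; repeat destruct Rle_dec; intros; repeat split; lra. }
  apply H.
  - split; [|apply clamp_in]. destruct Hu1 as [_ [A B]].
    revert A B; unfold Rabs; destruct Rcase_abs; intros; lra.
  - tauto.
  - eapply Rle_lt_trans; [apply clamp_lip|].
    revert Hw; unfold Rmin; repeat destruct Rle_dec; intros; lra.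
Qed.

Lemma cont_back F : (forall x v, Dom x v -> continuity_2d_pt (ext F) x v) -> jcont F.
Proof.
  intros H x v Hd eps He.
  destruct (H x v Hd (mkposreal _ He)) as [d Hd'].
  exists d; split; [apply cond_pos|].
  intros x' v' Hd2 H1 H2.
  specialize (Hd' x' v' H1 H2). unfold ext in Hd'.
  rewrite !clamp_id in Hd' by (destruct Hd, Hd2; tauto). exact Hd'.
Qed.

Lemma jcont_mult F G : jcont F -> jcont G -> jcont (fun x v => F x v * G x v).
Proof.
  intros HF HG; apply cont_back; intros x v Hd.
  apply (continuity_2d_pt_mult (ext F) (ext G)); apply cont2d; auto; apply Hd.
Qed.

Lemma jcont_plus F G : jcont F -> jcont G -> jcont (fun x v => F x v + G x v).
Proof.
  intros HF HG; apply cont_back; intros x v Hd.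
  apply (continuity_2d_pt_plus (ext F) (ext G)); apply cont2d; auto; apply Hd.
Qed.

Lemma jcont_ext F G : (forall x v, Dom x v -> F x v = G x v) -> jcont F -> jcont G.
Proof.
  intros E HF x v Hd eps He.
  destruct (HF x v Hd eps He) as [d [Hd0 H]]. exists d; split; auto.
  intros x' v' Hd' H1 H2. rewrite <- !E by auto. auto.
Qed.

Lemma cont1 F x z : jcont F -> 0 < x < 1 -> continuous (fun v => ext F x v) z.
Proof.
  intros HF Hx. apply filterlim_locally. intros eps.
  destruct (cont2d F x z HF Hx eps) as [d H].
  exists d. intros y Hy. apply H.
  - rewrite Rminus_eq_0, Rabs_R0; apply cond_pos.
  - exact Hy.
Qed.

Lemma exRInt_ext F x : jcont F -> 0 < x < 1 -> ex_RInt (fun v => ext F x v) (-1) 1.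
Proof. intros; apply (ex_RInt_continuous (V:=R_CompleteNormedModule)); intros; apply cont1; auto. Qed.

Lemma exRInt F x : jcont F -> 0 < x < 1 -> ex_RInt (fun v => F x v) (-1) 1.
Proof.
  intros HF Hx. apply ex_RInt_ext with (ext F x).
  - intros z Hz; rewrite Rmin_left, Rmax_right in Hz by lra.
    unfold ext; rewrite clamp_id by lra; auto.
  - apply exRInt_ext; auto.
Qed.

Lemma loc01 (x0 : R) : 0 < x0 < 1 -> locally x0 (fun x => 0 < x < 1).
Proof.
  intros H. assert (Hm : 0 < Rmin x0 (1 - x0)) by (unfold Rmin; destruct Rle_dec; lra).
  exists (mkposreal _ Hm); simpl; intros y Hy.
  change (Rabs (y - x0) < Rmin x0 (1 - x0)) in Hy.
  revert Hy; unfold Rmin, Rabs; repeat destruct Rle_dec; destruct Rcase_abs; intros; lra.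
Qed.

Lemma derRInt F x0 :
  (forall x v, Dom x v -> ex_derive (fun y => F y v) x) ->
  jcont F -> jcont (dx F) -> 0 < x0 < 1 ->
  is_derive (fun x => RInt (fun v => F x v) (-1) 1) x0 (RInt (fun v => dx F x0 v) (-1) 1).
Proof.
  intros Hd HF HdF Hx.
  assert (E : forall x, RInt (fun v => F x v) (-1) 1 = RInt (fun v => ext F x v) (-1) 1).
  { intros x; apply RInt_ext; intros z Hz; rewrite Rmin_left, Rmax_right in Hz by lra.
    unfold ext; rewrite clamp_id by lra; auto. }
  assert (E2 : RInt (fun v => dx F x0 v) (-1) 1 = RInt (fun v => ext (dx F) x0 v) (-1) 1).
  { apply RInt_ext; intros z Hz; rewrite Rmin_left, Rmax_right in Hz by lra.
    unfold ext; rewrite clamp_id by lra; auto. }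
  apply is_derive_ext with (fun x => RInt (fun v => ext F x v) (-1) 1).
  { intros; symmetry; apply E. }
  rewrite E2.
  apply (is_derive_RInt_param (ext F) (-1) 1 x0).
  - eapply filter_imp; [|apply loc01; eauto]. intros x Hx' t _.
    apply Hd. split; auto. apply clamp_in.
  - intros t _. apply (cont2d (dx F)); auto.
  - eapply filter_imp; [|apply loc01; eauto]. intros x Hx'.
    apply exRInt_ext; auto.
Qed.
Lemma is_RInt_lin (f g : R -> R) a b If Ig p q :
  is_RInt f a b If -> is_RInt g a b Ig ->
  is_RInt (fun v => p * f v + q * g v) a b (p * If + q * Ig).
Proof.
  intros Hf Hg.
  exact (is_RInt_plus _ _ a b _ _ (is_RInt_scal f a b p If Hf) (is_RInt_scal g a b q Ig Hg)).
Qed.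

Lemma RInt_is F x : jcont F -> 0 < x < 1 ->
  is_RInt (fun v => F x v) (-1) 1 (RInt (fun v => F x v) (-1) 1).
Proof. intros; apply (RInt_correct (V:=R_CompleteNormedModule)); apply exRInt; auto. Qed.

Theorem proposition1 (Kn : R) (sigma_s0 : R -> R) (phi_d : R -> R -> R) (y : R)
  (f0 g : R -> R -> R) :
  0 < Kn ->
  (forall x, 0 <= x <= 1 -> 0 < sigma_s0 x) ->
  (y = 0 \/ y = 1) ->
  is_RTE_sol 1 Kn sigma_s0 (fun _ => 0) f0 ->
  inflow_bc f0 phi_d ->
  is_RTE_sol (-1) Kn sigma_s0 (fun _ => 0) g ->
  outflow_bc g (delta_bd y) ->
  exists c : R, forall x, 0 < x < 1 -> gammaKn Kn g f0 x = c.
Proof.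
  intros HKn Hs _ [fd [fc [fdc [_ feq]]]] _ [gd [gc [gdc [_ geq]]]] _.
  set (P := fun x v => g x v * f0 x v).
  assert (Pd : forall x v, Dom x v -> ex_derive (fun y => P y v) x).
  { intros; apply ex_derive_mult; auto. }
  assert (PdE : forall x v, Dom x v -> dx P x v = dx g x v * f0 x v + g x v * dx f0 x v).
  { intros x v H; unfold dx, P; apply (Derive_mult (fun y => g y v) (fun y => f0 y v)); auto. }
  assert (Pc : jcont P) by (apply jcont_mult; auto).
  assert (Pdc : jcont (dx P)).
  { apply jcont_ext with (fun x v => dx g x v * f0 x v + g x v * dx f0 x v).
    - intros; symmetry; auto.
    - apply jcont_plus; apply jcont_mult; auto. }
  set (If := fun x => RInt (fun v => f0 x v) (-1) 1).
  set (Ig := fun x => RInt (fun v => g x v) (-1) 1).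
  set (IP := fun x => RInt (fun v => P x v) (-1) 1).
  set (Phi := fun x => / 2 * If x * Ig x - IP x).
  assert (Hgam : forall x, 0 < x < 1 -> gammaKn Kn g f0 x = / Kn * Phi x).
  { intros x Hx. unfold gammaKn, Phi. f_equal.
    apply is_RInt_unique.
    apply is_RInt_ext with (fun v => (/2 * If x) * g x v + (-1) * P x v).
    - intros v _; unfold Lop, avg, P; fold (If x); cbv beta; ring_simplify; reflexivity.
    - replace (/ 2 * If x * Ig x - IP x) with ((/2 * If x) * Ig x + (-1) * IP x) by ring.
      apply is_RInt_lin; apply RInt_is; auto. }
  assert (Hder : forall x, 0 < x < 1 -> is_derive Phi x 0).
  { intros x Hx.
    pose proof (derRInt f0 x fd fc fdc Hx) as D1.
    pose proof (derRInt g x gd gc gdc Hx) as D2.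
    pose proof (derRInt P x Pd Pc Pdc Hx) as D3.
    set (dF := RInt (fun v => dx f0 x v) (-1) 1) in *.
    set (dG := RInt (fun v => dx g x v) (-1) 1) in *.
    set (dP := RInt (fun v => dx P x v) (-1) 1) in *.
    set (Q1 := RInt (fun v => dx g x v * f0 x v) (-1) 1).
    set (Q2 := RInt (fun v => g x v * dx f0 x v) (-1) 1).
    assert (HQ1 : is_RInt (fun v => dx g x v * f0 x v) (-1) 1 Q1).
    { apply (RInt_is (fun x v => dx g x v * f0 x v)); auto; apply jcont_mult; auto. }
    assert (HQ2 : is_RInt (fun v => g x v * dx f0 x v) (-1) 1 Q2).
    { apply (RInt_is (fun x v => g x v * dx f0 x v)); auto; apply jcont_mult; auto. }
    assert (EP : dP = Q1 + Q2).
    { apply is_RInt_unique.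
      apply is_RInt_ext with (fun v => 1 * (dx g x v * f0 x v) + 1 * (g x v * dx f0 x v)).
      - intros v Hv; rewrite Rmin_left, Rmax_right in Hv by lra.
        change (@eq R (1 * (dx g x v * f0 x v) + 1 * (g x v * dx f0 x v)) (dx P x v)); rewrite PdE by (split; [auto|lra]); ring.
      - replace (Q1 + Q2) with (1 * Q1 + 1 * Q2) by ring. apply is_RInt_lin; auto. }
    set (A := / 2 * If x). set (B := / 2 * Ig x).
    assert (Hz : 0 = A * dG - Q1 + (B * dF - Q2)).
    { assert (H1 : is_RInt (fun v => A * dx g x v + (-1) * (dx g x v * f0 x v)) (-1) 1
                    (A * dG + (-1) * Q1)).
      { apply is_RInt_lin; auto. apply (RInt_is (dx g)); auto. }
      assert (H2 : is_RInt (fun v => B * dx f0 x v + (-1) * (g x v * dx f0 x v)) (-1) 1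
                    (B * dF + (-1) * Q2)).
      { apply is_RInt_lin; auto. apply (RInt_is (dx f0)); auto. }
      pose proof (is_RInt_lin _ _ _ _ _ _ 1 1 H1 H2) as H3.
      assert (H0 : is_RInt (fun _ => 0) (-1) 1 0).
      { pose proof (is_RInt_const (V:=R_NormedModule) (-1) 1 0) as H.
        unfold scal in H; simpl in H; unfold mult in H; simpl in H.
        rewrite Rmult_0_r in H; exact H. }
      replace (A * dG - Q1 + (B * dF - Q2)) with
        (1 * (A * dG + -1 * Q1) + 1 * (B * dF + -1 * Q2)) by ring.
      apply (filterlim_locally_unique _ _ _ H0).
      apply is_RInt_ext with (2 := H3).
      intros v Hv; rewrite Rmin_left, Rmax_right in Hv by lra.
      assert (Dv : Dom x v) by (split; [auto|lra]).
      pose proof (feq x v Dv) as E1. pose proof (geq x v Dv) as E2.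
      unfold Lop, avg in E1, E2. fold (If x) in E1. fold (Ig x) in E2. fold A in E1. fold B in E2.
      set (c := / Kn * sigma_s0 x) in *.
      assert (Hc : c <> 0).
      { unfold c; apply Rgt_not_eq, Rmult_lt_0_compat.
        apply Rinv_0_lt_compat; auto. apply Hs; lra. }
      assert (K : dx g x v * (A - f0 x v) + dx f0 x v * (B - g x v) = 0).
      { apply (Rmult_eq_reg_l c); auto.
        transitivity (dx g x v * (c * (A - f0 x v)) + dx f0 x v * (c * (B - g x v))); [ring|].
        rewrite Rmult_0_r in E1, E2. rewrite Rmult_0_l, Rminus_0_r in E1, E2.
        rewrite <- E1, <- E2. ring. }
      rewrite <- K. cbv beta. match goal with |- ?a = ?b => change (@eq R a b) end. ring. }
    apply is_derive_ext with (fun t => minus (/ 2 * (If t * Ig t)) (IP t)).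
    { intros t; unfold Phi, minus, plus, opp; simpl; ring. }
    replace 0 with (minus (/ 2 * plus (mult dF (Ig x)) (mult (If x) dG)) dP).
    2: { unfold minus, plus, opp, mult; simpl. rewrite EP. unfold A, B in Hz. lra. }
    apply (is_derive_minus (K:=R_AbsRing) (V:=R_NormedModule)); [|exact D3].
    apply is_derive_scal.
    apply (is_derive_mult (K:=R_AbsRing)); auto.
    intros; apply Rmult_comm. }
  exists (/ Kn * Phi (/ 2)).
  intros x Hx. rewrite Hgam by auto. f_equal.
  destruct (MVT_gen Phi (/ 2) x (fun _ => 0)) as [c [_ Hc]].
  - intros z Hz. apply Hder.
    revert Hz; unfold Rmin, Rmax; destruct Rle_dec; intros; lra.
  - intros z Hz. apply continuity_pt_filterlim.
    apply (ex_derive_continuous (K:=R_AbsRing) (V:=R_NormedModule)).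
    exists 0. apply Hder.
    revert Hz; unfold Rmin, Rmax; destruct Rle_dec; intros; lra.
  - lra.
Qed.
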